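(* Let $N\le D_d$. For $t_1,\dots,t_N\in[0,1]$ consider the depolarizing channels $\Phi_{t_i}=t_i\,\mathrm{id}+(1-t_i)\Delta$ on $\mathcal L(\mathbb C^d)$. If $t_1^2+\cdots+t_N^2>1$, then the channels $\Phi_{t_1},\dots,\Phi_{t_N}$ are incompatible.
   Context: $\mathrm{id}(X)=X$ and $\Delta(X)=(\operatorname{Tr}X)I/d$. $D_d$ denotes the maximal cardinality of a set of mutually unbiased orthonormal bases of $\mathbb C^d$ (bases $\mathbf e,\mathbf f$ are unbiased if $|\langle e_i,f_j\rangle|=1/\sqrt d$ for all $i,j$). Channels $\Phi_1,\dots,\Phi_N$ on $\mathcal L(\mathbb C^d)$ are compatible if there is a completely positive trace-preserving $\Lambda:\mathcal L(\mathbb C^d)\to\mathcal L((\mathbb C^d)^{\otimes N})$ whose $i$-th marginal (partial trace over all other factors) is $\Phi_i$ for each $i$; otherwise incompatible. *)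

(* Defs.v *)
From mathcomp Require Import all_boot all_order all_algebra.
From mathcomp.real_closed Require Import complex.
Set Implicit Arguments. Unset Strict Implicit. Unset Printing Implicit Defensive.
Import Order.TTheory GRing.Theory Num.Theory.
Local Open Scope ring_scope.
Local Open Scope complex_scope.

Definition op (R : rcfType) (I : finType) := I -> I -> R[i].

Definition optrace (R : rcfType) (I : finType) (X : op R I) : R[i] :=
  \sum_(i : I) X i i.

(* positive semidefinite: <x, X x> >= 0 for all x (in the partial order of C) *)
Definition psd (R : rcfType) (I : finType) (X : op R I) : Prop :=
  forall x : I -> R[i], 0 <= \sum_(i : I) \sum_(j : I) (x i)^* * X i j * x j.

Definition linear_map (R : rcfType) (I J : finType) (L : op R I -> op R J) : Prop :=
  (forall X Y, L (fun i j => X i j + Y i j) = fun a b => L X a b + L Y a b) /\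
  (forall (c : R[i]) X, L (fun i j => c * X i j) = fun a b => c * L X a b).

(* id_k (x) L, acting blockwise on operators on C^k (x) C^I *)
Definition ampl (R : rcfType) (I J : finType) (k : nat) (L : op R I -> op R J)
  : op R ('I_k * I)%type -> op R ('I_k * J)%type :=
  fun X p q => L (fun i i' => X (p.1, i) (q.1, i')) p.2 q.2.

Definition completely_positive (R : rcfType) (I J : finType) (L : op R I -> op R J) : Prop :=
  forall (k : nat) (X : op R ('I_k * I)%type), psd X -> psd (ampl L X).

Definition trace_preserving (R : rcfType) (I J : finType) (L : op R I -> op R J) : Prop :=
  forall X, optrace (L X) = optrace X.

Definition channel (R : rcfType) (I J : finType) (L : op R I -> op R J) : Prop :=
  [/\ linear_map L, completely_positive L & trace_preserving L].

(* index set of (C^d)^{(x) N} *)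
Definition tens_index (d N : nat) : finType := {ffun 'I_N -> 'I_d}.

(* partial trace over all tensor factors except the i-th *)
Definition marginal (R : rcfType) (d N : nat) (i : 'I_N)
  (Y : op R (tens_index d N)) : op R 'I_d :=
  fun a b => \sum_(f : tens_index d N | f i == a)
               Y f (finfun (fun j : 'I_N => if j == i then b else f j)).

Definition compatible (R : rcfType) (d N : nat) (Phi : 'I_N -> op R 'I_d -> op R 'I_d)
  : Prop :=
  exists Lam : op R 'I_d -> op R (tens_index d N),
    channel Lam /\ forall (i : 'I_N) (X : op R 'I_d), marginal i (Lam X) = Phi i X.

Definition depolarizing (R : rcfType) (d : nat) (t : R) (X : op R 'I_d) : op R 'I_d :=
  fun a b => t%:C * X a b
             + (1 - t)%:C * (optrace X * (if a == b then 1 else 0) / d%:R).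

Definition inner (R : rcfType) (d : nat) (u v : 'I_d -> R[i]) : R[i] :=
  \sum_(k < d) (u k)^* * v k.

Definition orthonormal_basis (R : rcfType) (d : nat) (e : 'I_d -> 'I_d -> R[i]) : Prop :=
  forall i j : 'I_d, inner (e i) (e j) = (if i == j then 1 else 0).

Definition unbiased (R : rcfType) (d : nat) (e f : 'I_d -> 'I_d -> R[i]) : Prop :=
  forall i j : 'I_d, `|inner (e i) (f j)| = ((Num.sqrt (d%:R : R))^-1)%:C.

(* "N <= D_d": there are N mutually unbiased orthonormal bases of C^d *)
Definition has_N_MUBs (R : rcfType) (d N : nat) : Prop :=
  exists B : 'I_N -> 'I_d -> 'I_d -> R[i],
    (forall n, orthonormal_basis (B n)) /\
    (forall n m, n != m -> unbiased (B n) (B m)).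

(* Main.v *)
Require Import Defs.
From mathcomp Require Import all_boot all_order all_algebra.
From mathcomp.real_closed Require Import complex.
From Stdlib Require Import FunctionalExtensionality.
From mathcomp Require Import ring.
Import Order.TTheory GRing.Theory Num.Theory.
Set Implicit Arguments. Unset Strict Implicit. Unset Printing Implicit Defensive.
Local Open Scope ring_scope.

Section S.
Variable R : rcfType.
Local Notation C := R[i].
Definition qf (I : finType) (Y : op R I) (x : I -> C) : C :=
  \sum_(i : I) \sum_(j : I) (x i)^* * Y i j * x j.

Lemma psdE (I : finType) (Y : op R I) : psd Y <-> forall x, 0 <= qf Y x.
Proof. by []. Qed.

Lemma sum_I1 (I : finType) (F : ('I_1 * I)%type -> C) :
  \sum_(p : ('I_1 * I)%type) F p = \sum_(i : I) F (ord0, i).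
Proof.
rewrite (eq_bigr (fun p => F (p.1, p.2))); last by case.
by rewrite -(pair_bigA _ (fun o i => F (o, i))) /= big_ord1.
Qed.

Lemma cp_pos (I J : finType) (L : op R I -> op R J) X :
  completely_positive L -> psd X -> psd (L X).
Proof.
move=> cpL psdX.
pose X' : op R ('I_1 * I)%type := fun p q => X p.2 q.2.
have psdX' : psd X'.
  move=> x; rewrite /X'.
  have := psdX (fun i => x (ord0, i)).
  congr (_ <= _).
  rewrite sum_I1; apply: eq_bigr => i _; rewrite sum_I1 //.
have := cpL 1%N X' psdX'.
move=> H x; have := H (fun p => x p.2).
congr (_ <= _).
rewrite sum_I1; apply: eq_bigr => i _; rewrite sum_I1 //.
Qed.

Lemma cjM (x y : C) : (x * y)^* = x^* * y^*. Proof. exact: rmorphM. Qed.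
Lemma cjD (x y : C) : (x + y)^* = x^* + y^*. Proof. exact: rmorphD. Qed.
Lemma cjB (x y : C) : (x - y)^* = x^* - y^*. Proof. exact: rmorphB. Qed.
Lemma cjN (x : C) : (- x)^* = - x^*. Proof. exact: rmorphN. Qed.
Lemma cjK (x : C) : x^*^* = x. Proof. exact: conjCK. Qed.
Lemma cjV (x : C) : (x^-1)^* = x^*^-1. Proof. exact: fmorphV. Qed.
Lemma cj_sum (I : finType) (F : I -> C) : (\sum_i F i)^* = \sum_i (F i)^*.
Proof. exact: rmorph_sum. Qed.
Lemma cj_nat n : (n%:R : C)^* = n%:R. Proof. exact: rmorph_nat. Qed.
Lemma cj_real (x : R) : (x%:C)%C^* = (x%:C)%C. Proof. exact: conjc_real. Qed.
Definition Id (d : nat) : op R 'I_d := fun a b => if a == b then 1 else 0.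
Definition Pm (d : nat) (u : 'I_d -> C) : op R 'I_d := fun a b => u a * (u b)^*.
Definition Qm (d : nat) (u : 'I_d -> C) (al : C) : op R 'I_d :=
  fun a b => Pm u a b - al * Id a b.
Definition hs (I : finType) (X Y : op R I) : C :=
  \sum_(a : I) \sum_(b : I) (X a b)^* * Y a b.

Lemma conj_Id d (a b : 'I_d) : (Id a b)^* = Id a b.
Proof. by rewrite /Id; case: (a == b); rewrite ?conjC1 ?conjC0. Qed.

Lemma sum_delta d (a : 'I_d) (F : 'I_d -> C) :
  \sum_b Id a b * F b = F a.
Proof.
rewrite (bigD1 a) //= /Id eqxx mul1r big1 ?addr0 // => b /negbTE.
by rewrite eq_sym => ->; rewrite mul0r.
Qed.

Lemma conj_inner d (u v : 'I_d -> C) : (inner u v)^* = inner v u.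
Proof.
rewrite /inner cj_sum; apply: eq_bigr => k _.
by rewrite cjM cjK mulrC.
Qed.

Lemma hsQ d (u v : 'I_d -> C) (al be : C) :
  hs (Qm u al) (Qm v be) = inner u v * inner v u - be * inner u u
    - al^* * inner v v + al^* * be * d%:R.
Proof.
rewrite /hs.
transitivity (\sum_a \sum_b ((u a)^* * v a * (u b * (v b)^*)
   - be * (Id a b * ((u a)^* * u b)) - al^* * (Id a b * (v a * (v b)^*))
   + al^* * be * (Id a b * Id a b))).
  apply: eq_bigr => a _; apply: eq_bigr => b _.
  rewrite /Qm /Pm cjB !cjM cjK conj_Id; ring.
rewrite (eq_bigr (fun a => (u a)^* * v a * inner v u - be * ((u a)^* * u a)
    - al^* * (v a * (v a)^*) + al^* * be)); last first.
  move=> a _; rewrite !big_split /= !sumrN -!mulr_sumr !sum_delta /Id eqxx mulr1.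
  rewrite -conj_inner /inner cj_sum; congr (_ - _ - _ + _).
  congr (_ * _); apply: eq_bigr => k _; rewrite cjM cjK mulrC //.
rewrite !big_split /= !sumrN -!mulr_suml -!mulr_sumr sumr_const card_ord.
rewrite [X in _ - al^* * X](eq_bigr (fun i => (v i)^* * v i)); last by move=> i _; rewrite mulrC.
rewrite /inner -mulr_natr; ring.
Qed.

Lemma sum_exch3 (I J K : finType) (F : I -> J -> K -> C) :
  \sum_a \sum_b \sum_k F a b k = \sum_k \sum_a \sum_b F a b k.
Proof.
transitivity (\sum_a \sum_k \sum_b F a b k).
  by apply: eq_bigr => a _; exact: exchange_big.
exact: exchange_big.
Qed.

Lemma sum_exch4 (I J K L : finType) (F : I -> J -> K -> L -> C) :
  \sum_a \sum_b \sum_k \sum_l F a b k l = \sum_k \sum_l \sum_a \sum_b F a b k l.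
Proof.
rewrite (sum_exch3 (fun a b k => \sum_l F a b k l)).
apply: eq_bigr => k _; exact: (sum_exch3 (fun a b l => F a b k l)).
Qed.

Lemma sum_if_eq (I : finType) (i : I) (F : I -> C) :
  \sum_j (if i == j then F j else 0) = F i.
Proof.
rewrite (bigD1 i) //= eqxx big1 ?addr0 // => j /negbTE.
by rewrite eq_sym => ->.
Qed.

Lemma qf_lin (I K : finType) (X : op R I) (F : K -> op R I) (c : C) (e : K -> C) x :
  qf (fun a b => c * X a b - \sum_k e k * F k a b) x
  = c * qf X x - \sum_k e k * qf (F k) x.
Proof.
rewrite /qf.
transitivity (\sum_a \sum_b (c * ((x a)^* * X a b * x b)
   - \sum_k e k * ((x a)^* * F k a b * x b))).
  apply: eq_bigr => a _; apply: eq_bigr => b _.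
  rewrite mulrBr mulrBl mulr_sumr mulr_suml; congr (_ - _); first ring.
  by apply: eq_bigr => k _; ring.
rewrite (eq_bigr (fun a => c * \sum_b ((x a)^* * X a b * x b)
   - \sum_k e k * \sum_b ((x a)^* * F k a b * x b))); last first.
  move=> a _; rewrite sumrB mulr_sumr; congr (_ - _).
  by rewrite exchange_big /=; apply: eq_bigr => k _; rewrite mulr_sumr.
rewrite sumrB mulr_sumr; congr (_ - _).
by rewrite exchange_big /=; apply: eq_bigr => k _; rewrite mulr_sumr.
Qed.

Lemma qf_Pm d (u x : 'I_d -> C) : qf (Pm u) x = inner x u * inner u x.
Proof.
rewrite /qf /inner mulr_suml; apply: eq_bigr => a _.
rewrite mulr_sumr; apply: eq_bigr => b _; rewrite /Pm; ring.
Qed.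

Lemma qf_Id d (x : 'I_d -> C) : qf (@Id d) x = inner x x.
Proof.
rewrite /qf /inner; apply: eq_bigr => a _.
rewrite (eq_bigr (fun b => Id a b * ((x a)^* * x b))) ?sum_delta //.
by move=> b _; ring.
Qed.

Lemma qf_Qm d (u x : 'I_d -> C) al :
  qf (Qm u al) x = inner x u * inner u x - al * inner x x.
Proof.
rewrite -qf_Pm -qf_Id /qf mulr_sumr -sumrB; apply: eq_bigr => a _.
rewrite mulr_sumr -sumrB; apply: eq_bigr => b _; rewrite /Qm; ring.
Qed.

Lemma sum2_scal (I : finType) (c : C) (f : I -> I -> C) :
  \sum_a \sum_b c * f a b = c * \sum_a \sum_b f a b.
Proof. by rewrite mulr_sumr; apply: eq_bigr => a _; rewrite mulr_sumr. Qed.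

Lemma hs_Z (I K : finType) (F : K -> op R I) (G : op R I) (n : C) (t : K -> C) :
  n^* = n -> (forall k, (t k)^* = t k) ->
  hs (fun a b => n * \sum_k t k * F k a b - G a b)
     (fun a b => n * \sum_k t k * F k a b - G a b)
  = n * n * \sum_k \sum_l t k * t l * hs (F k) (F l)
    - n * \sum_k t k * (hs (F k) G + hs G (F k)) + hs G G.
Proof.
move=> hn ht; rewrite /hs.
transitivity (\sum_a \sum_b (n * n * \sum_k \sum_l t k * t l * ((F k a b)^* * F l a b)
   - n * \sum_k t k * ((F k a b)^* * G a b + (G a b)^* * F k a b)
   + (G a b)^* * G a b)).
  apply: eq_bigr => a _; apply: eq_bigr => b _.
  have E1 : \sum_k \sum_l t k * t l * ((F k a b)^* * F l a b)
      = (\sum_k t k * (F k a b)^*) * (\sum_l t l * F l a b).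
    rewrite mulr_suml; apply: eq_bigr => k _; rewrite mulr_sumr.
    by apply: eq_bigr => l _; ring.
  have E2 : \sum_k t k * ((F k a b)^* * G a b + (G a b)^* * F k a b)
      = (\sum_k t k * (F k a b)^*) * G a b + (G a b)^* * (\sum_k t k * F k a b).
    rewrite (eq_bigr (fun k => t k * (F k a b)^* * G a b + (G a b)^* * (t k * F k a b))).
      by rewrite big_split /= -mulr_suml -mulr_sumr.
    by move=> k _; ring.
  rewrite E1 E2 cjB cjM hn cj_sum.
  rewrite (eq_bigr (fun k => t k * (F k a b)^*)); last by move=> k _; rewrite cjM ht.
  ring.
rewrite (eq_bigr (fun a => \sum_b (n * n * \sum_k \sum_l t k * t l * ((F k a b)^* * F l a b))
   - \sum_b (n * \sum_k t k * ((F k a b)^* * G a b + (G a b)^* * F k a b))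
   + \sum_b ((G a b)^* * G a b))); last by move=> a _; rewrite !big_split /= sumrN.
rewrite !big_split /= sumrN.
congr (_ - _ + _).
- rewrite sum2_scal; congr (_ * _); rewrite sum_exch4.
  apply: eq_bigr => k _; apply: eq_bigr => l _; exact: sum2_scal.
- rewrite sum2_scal; congr (_ * _); rewrite sum_exch3.
  apply: eq_bigr => k _; rewrite sum2_scal; congr (_ * _).
  by rewrite -big_split; apply: eq_bigr => a _; rewrite -big_split.
Qed.

Lemma cjdV d : ((d%:R : C)^-1)^* = d%:R^-1.
Proof. by rewrite cjV cj_nat. Qed.

Lemma inner_self_ge0 d (x : 'I_d -> C) : 0 <= inner x x.
Proof. by apply: sumr_ge0 => a _; rewrite mulrC mul_conjC_ge0. Qed.

Lemma inner_self_eq0 d (x : 'I_d -> C) : inner x x = 0 -> forall a, x a = 0.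
Proof.
move=> h a.
have H : forall b : 'I_d, true -> 0 <= (x b)^* * x b.
  by move=> b _; rewrite mulrC mul_conjC_ge0.
have /eqP := psumr_eq0P H h (i:=a) isT.
by rewrite mulf_eq0 conjC_eq0 orbb => /eqP.
Qed.

Lemma psd_M d N (v : 'I_N -> 'I_d -> C) (t : 'I_N -> C) :
  (0 < d)%N ->
  (forall i, inner (v i) (v i) = 1) ->
  (forall i j, i != j -> inner (v i) (v j) * inner (v j) (v i) = d%:R^-1) ->
  (forall i, (t i)^* = t i) ->
  psd (fun a b => (1 - d%:R^-1) * (\sum_i t i * t i + 1) / 2 * Id a b
                  - \sum_i t i * Qm (v i) d%:R^-1 a b).
Proof.
move=> d0 hv1 hv2 ht x.
have dn0 : (d%:R : C) != 0 by rewrite pnatr_eq0 -lt0n.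
set c := (1 - d%:R^-1) * (\sum_i t i * t i + 1) / 2.
change (0 <= qf (fun a b => c * Id a b - \sum_i t i * Qm (v i) d%:R^-1 a b) x).
rewrite qf_lin qf_Id.
under eq_bigr do rewrite qf_Qm.
set n := inner x x.
have hn : n^* = n by rewrite /n conj_inner.
have n0 : 0 <= n by exact: inner_self_ge0.
set Y := \sum_i t i * (inner x (v i) * inner (v i) x - d%:R^-1 * n).
have hZ := hs_Z (fun i => Qm (v i) d%:R^-1) (Qm x (n / d%:R)) hn ht.
have hQQ : forall k l, hs (Qm (v k) d%:R^-1) (Qm (v l) d%:R^-1)
    = if k == l then 1 - d%:R^-1 else 0.
  move=> k l; rewrite hsQ !hv1 cjdV !mulr1.
  case: eqP => [->|/eqP kl]; first by rewrite hv1; field; exact: dn0.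
  by rewrite hv2 //; field; exact: dn0.
have hQR : forall k, hs (Qm (v k) d%:R^-1) (Qm x (n / d%:R))
    + hs (Qm x (n / d%:R)) (Qm (v k) d%:R^-1)
    = 2 * (inner x (v k) * inner (v k) x - d%:R^-1 * n).
  move=> k; rewrite !hsQ hv1 cjdV !cjM hn cjdV -/n; field; exact: dn0.
have hRR : hs (Qm x (n / d%:R)) (Qm x (n / d%:R)) = n * n * (1 - d%:R^-1).
  rewrite hsQ !cjM hn cjdV -/n; field; exact: dn0.
have S1 : \sum_k \sum_l t k * t l * hs (Qm (v k) d%:R^-1) (Qm (v l) d%:R^-1)
    = (1 - d%:R^-1) * \sum_k t k * t k.
  rewrite mulr_sumr; apply: eq_bigr => k _.
  rewrite (eq_bigr (fun l => if k == l then t k * t l * (1 - d%:R^-1) else 0)).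
    by rewrite sum_if_eq mulrC.
  by move=> l _; rewrite hQQ; case: eqP => _; rewrite ?mulr0.
have S2 : \sum_k t k * (hs (Qm (v k) d%:R^-1) (Qm x (n / d%:R))
        + hs (Qm x (n / d%:R)) (Qm (v k) d%:R^-1)) = 2 * Y.
  rewrite /Y mulr_sumr; apply: eq_bigr => k _; rewrite hQR; ring.
rewrite S1 S2 hRR in hZ.
have hge : 0 <= hs (fun a b : 'I_d =>
       n * \sum_k t k * Qm (v k) d%:R^-1 a b - Qm x (n / d%:R) a b)
      (fun a b : 'I_d =>
       n * \sum_k t k * Qm (v k) d%:R^-1 a b - Qm x (n / d%:R) a b).
  by apply: sumr_ge0 => a _; apply: sumr_ge0 => b _; rewrite mulrC mul_conjC_ge0.
rewrite hZ in hge.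
have two0 : (2 : C) != 0 by rewrite pnatr_eq0.
have key : n * n * ((1 - d%:R^-1) * \sum_k t k * t k) - n * (2 * Y)
    + n * n * (1 - d%:R^-1) = n * (2 * (c * n - Y)).
  by rewrite /c; field; rewrite ?two0 ?dn0.
rewrite key in hge.
case: (eqVneq n 0) => [n_eq0 | nn0].
  have x0 := inner_self_eq0 n_eq0.
  have -> : Y = 0.
    rewrite /Y big1 // => i _.
    rewrite /inner big1; first by rewrite mul0r n_eq0 mulr0 subrr mulr0.
    by move=> a _; rewrite x0 conjC0 mul0r.
  by rewrite n_eq0 mulr0 subrr.
have npos : 0 < n by rewrite lt_def nn0 n0.
by move: hge; rewrite pmulr_rge0 // pmulr_rge0 // ltr0n.
Qed.


Lemma cj_prod (I : finType) (F : I -> C) : (\prod_i F i)^* = \prod_i (F i)^*.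
Proof. exact: rmorph_prod. Qed.

Lemma completeness d (e : 'I_d -> 'I_d -> C) : orthonormal_basis e ->
  forall a b, \sum_k (e k a)^* * e k b = Id a b.
Proof.
move=> he a b.
pose U : 'M[C]_d := \matrix_(k, a) e k a.
pose V : 'M[C]_d := \matrix_(a, k) (e k a)^*.
have UV : U *m V = 1%:M.
  apply/matrixP => k l; rewrite !mxE.
  rewrite (eq_bigr (fun a => (e l a)^* * e k a)); last by move=> j _; rewrite !mxE mulrC.
  by have := he l k; rewrite /inner => ->; rewrite eq_sym; case: (k == l).
have := mulmx1C UV => /matrixP /(_ a b); rewrite !mxE.
rewrite (eq_bigr (fun k => (e k a)^* * e k b)); last by move=> j _; rewrite /U /V !mxE.
by move=> ->; rewrite /Id; case: (a == b).
Qed.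

Lemma sum_qf_basis d (e : 'I_d -> 'I_d -> C) : orthonormal_basis e ->
  forall X : op R 'I_d, \sum_k qf X (e k) = optrace X.
Proof.
move=> he X; rewrite /qf /optrace -sum_exch3; apply: eq_bigr => a _.
rewrite (eq_bigr (fun b => Id a b * X a b)); first by rewrite sum_delta.
move=> b _; rewrite -(completeness he) mulr_suml; apply: eq_bigr => k _; ring.
Qed.

Definition upd d N (i : 'I_N) (f : tens_index d N) (b : 'I_d) : tens_index d N :=
  finfun (fun j : 'I_N => if j == i then b else f j).

Lemma upd_id d N (i : 'I_N) (f : tens_index d N) : upd i f (f i) = f.
Proof. by apply/ffunP => j; rewrite ffunE; case: eqP => // ->. Qed.

Lemma optrace_marg d N (i : 'I_N) (Y : op R (tens_index d N)) :
  optrace (marginal i Y) = optrace Y.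
Proof.
rewrite /optrace /marginal (partition_big (fun f : tens_index d N => f i) predT) //=.
apply: eq_bigr => a _; apply: eq_bigr => f /eqP <-; congr (Y f _); exact: upd_id.
Qed.

Definition agree d N (i : 'I_N) (f g : tens_index d N) :=
  [forall j, (j != i) ==> (f j == g j)].

Lemma upd_eqE d N (i : 'I_N) (f g : tens_index d N) b :
  (upd i f b == g) = agree i f g && (b == g i).
Proof.
apply/eqP/andP => [<-|[/forallP H /eqP ->]].
  split; last by rewrite ffunE eqxx.
  by apply/forallP => j; apply/implyP => ji; rewrite ffunE (negbTE ji).
apply/ffunP => j; rewrite ffunE; case: eqP => [->|/eqP ji] //.
by have := H j; rewrite ji /= => /eqP.
Qed.

Lemma reindex d N (i : 'I_N) (f : tens_index d N) (F : tens_index d N -> C) :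
  \sum_g (if agree i f g then F g else 0) = \sum_b F (upd i f b).
Proof.
symmetry.
transitivity (\sum_b \sum_g (if upd i f b == g then F g else 0)).
  by apply: eq_bigr => b _; rewrite sum_if_eq.
rewrite exchange_big; apply: eq_bigr => g _.
case: (boolP (agree i f g)) => H.
  rewrite (eq_bigr (fun b => if g i == b then F g else 0)) ?sum_if_eq // => b _.
  by rewrite upd_eqE H /= eq_sym.
by apply: big1 => b _; rewrite upd_eqE (negbTE H).
Qed.

Definition w d N (B : 'I_N -> 'I_d -> 'I_d -> C) (k f : tens_index d N) : C :=
  \prod_j B j (k j) (f j).

Lemma prod_sum d N (B : 'I_N -> 'I_d -> 'I_d -> C) :
  (forall j, orthonormal_basis (B j)) ->
  forall (i : 'I_N) (ka : 'I_d) (f g : tens_index d N),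
  \sum_(k : tens_index d N | k i == ka) (w B k f)^* * w B k g
  = if agree i f g then (B i ka (f i))^* * B i ka (g i) else 0.
Proof.
move=> hB i ka f g.
pose Q := fun j : 'I_N => [pred k' : 'I_d | (j == i) ==> (k' == ka)].
transitivity (\sum_(k in family Q) \prod_j ((B j (k j) (f j))^* * B j (k j) (g j))).
  apply: eq_big => [k|k _]; last by rewrite /w cj_prod -big_split.
  apply/eqP/familyP => [E j|H]; first by rewrite /Q inE; apply/implyP => /eqP ->; rewrite E.
  by have := H i; rewrite /Q inE eqxx => /eqP.
rewrite -(bigA_distr_big_dep Q (fun j k' => (B j k' (f j))^* * B j k' (g j))) (bigD1 i) //=.
rewrite (eq_bigl (fun k' => k' == ka)); last by move=> k'; rewrite eqxx.
rewrite big_pred1_eq.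
rewrite (eq_bigr (fun j => Id (f j) (g j))); last first.
  move=> j ji; rewrite (eq_bigl predT); first exact: completeness.
  by move=> k'; rewrite (negbTE ji).
case: (boolP (agree i f g)) => H.
  rewrite big1 ?mulr1 // => j ji.
  by have := forallP H j; rewrite ji /= /Id => ->.
move/forallPn: H => [j]; rewrite negb_imply => /andP [ji fg].
by rewrite (bigD1 j) //= /Id (negbTE fg) mul0r mulr0.
Qed.

Lemma marg_w d N (B : 'I_N -> 'I_d -> 'I_d -> C) :
  (forall j, orthonormal_basis (B j)) ->
  forall (i : 'I_N) (ka : 'I_d) (Y : op R (tens_index d N)),
  \sum_(k : tens_index d N | k i == ka) qf Y (w B k)
  = qf (marginal i Y) (B i ka).
Proof.
move=> hB i ka Y; rewrite /qf.
transitivity (\sum_f \sum_g Y f g * \sum_(k : tens_index d N | k i == ka) (w B k f)^* * w B k g).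
  rewrite exchange_big; apply: eq_bigr => f _; rewrite exchange_big.
  apply: eq_bigr => g _; rewrite mulr_sumr; apply: eq_bigr => k _; ring.
transitivity (\sum_f \sum_b Y f (upd i f b) * ((B i ka (f i))^* * B i ka b)).
  apply: eq_bigr => f _.
  rewrite (eq_bigr (fun g => if agree i f g then Y f g * ((B i ka (f i))^* * B i ka (g i)) else 0)).
    rewrite reindex; apply: eq_bigr => b _; rewrite ffunE eqxx //.
  by move=> g _; rewrite prod_sum //; case: ifP; rewrite ?mulr0.
rewrite /marginal.
transitivity (\sum_a \sum_(f : tens_index d N | f i == a) \sum_b
    (B i ka a)^* * Y f (upd i f b) * B i ka b).
  rewrite (partition_big (fun f : tens_index d N => f i) predT) //=.
  apply: eq_bigr => a _; apply: eq_bigr => f /eqP <-.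
  by apply: eq_bigr => b _; ring.
apply: eq_bigr => a _; rewrite exchange_big; apply: eq_bigr => b _.
by rewrite mulr_sumr mulr_suml; apply: eq_bigr => f _.
Qed.

Lemma sum_w_qf d N (B : 'I_N -> 'I_d -> 'I_d -> C) (i0 : 'I_N) :
  (forall j, orthonormal_basis (B j)) ->
  forall Y : op R (tens_index d N), \sum_k qf Y (w B k) = optrace Y.
Proof.
move=> hB Y.
rewrite (partition_big (fun k : tens_index d N => k i0) predT) //=.
rewrite (eq_bigr (fun ka => qf (marginal i0 Y) (B i0 ka))).
  by rewrite sum_qf_basis // optrace_marg.
by move=> ka _; rewrite -marg_w.
Qed.

Lemma L0 (I J : finType) (L : op R I -> op R J) :
  linear_map L -> L (fun _ _ => 0) = (fun _ _ => 0).
Proof.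
move=> [_ hS]; have := hS 0 (fun _ _ => 0).
have -> : (fun i j : I => 0 * (fun _ _ => 0 : C) i j) = (fun _ _ => 0).
  by apply: functional_extensionality => a; apply: functional_extensionality => b; rewrite mul0r.
move=> ->; apply: functional_extensionality => a; apply: functional_extensionality => b.
by rewrite mul0r.
Qed.

Lemma Lsum (I J K : finType) (L : op R I -> op R J) (r : seq K) (F : K -> op R I) :
  linear_map L ->
  L (fun a b => \sum_(k <- r) F k a b) = (fun a b => \sum_(k <- r) L (F k) a b).
Proof.
move=> hL; elim: r => [|k r IH].
  rewrite (_ : (fun a b : I => \sum_(k <- [::]) F k a b) = fun _ _ => 0).
    rewrite L0 //; apply: functional_extensionality => a; apply: functional_extensionality => b.
    by rewrite big_nil.
  by apply: functional_extensionality => a; apply: functional_extensionality => b; rewrite big_nil.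
rewrite (_ : (fun a b : I => \sum_(k0 <- k :: r) F k0 a b)
   = fun a b => F k a b + (fun a b => \sum_(k0 <- r) F k0 a b) a b); last first.
  by apply: functional_extensionality => a; apply: functional_extensionality => b; rewrite big_cons.
case: hL => hA _; rewrite hA IH.
by apply: functional_extensionality => a; apply: functional_extensionality => b; rewrite big_cons.
Qed.

Lemma Llin (I J K : finType) (L : op R I -> op R J) (X : op R I) (F : K -> op R I)
  (c : C) (e : K -> C) :
  linear_map L ->
  L (fun a b => c * X a b - \sum_k e k * F k a b)
  = (fun a b => c * L X a b - \sum_k e k * L (F k) a b).
Proof.
move=> hL; have [hA hS] := hL.
rewrite (_ : (fun a b => c * X a b - \sum_k e k * F k a b)
   = fun a b => (fun a b => c * X a b) a b
        + (fun a b => (-1) * (fun a b => \sum_k (fun a b => e k * F k a b) a b) a b) a b);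
  last first.
  by apply: functional_extensionality => a; apply: functional_extensionality => b; rewrite mulN1r.
rewrite hA hS hS Lsum //.
apply: functional_extensionality => a; apply: functional_extensionality => b.
rewrite mulN1r; congr (_ - _); apply: eq_bigr => k _.
by rewrite hS.
Qed.

Lemma qf_depol d (t : R) (X : op R 'I_d) (u : 'I_d -> C) :
  qf (depolarizing t X) u
  = (t%:C)%C * qf X u + ((1 - t)%:C)%C * (optrace X / d%:R) * inner u u.
Proof.
rewrite /qf /depolarizing /inner.
rewrite (eq_bigr (fun a => (t%:C)%C * \sum_b ((u a)^* * X a b * u b)
   + ((1 - t)%:C)%C * (optrace X / d%:R) * ((u a)^* * u a))).
  by rewrite big_split /= -!mulr_sumr.
move=> a _.
rewrite (eq_bigr (fun b => (t%:C)%C * ((u a)^* * X a b * u b)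
   + ((1 - t)%:C)%C * (optrace X / d%:R) * (Id a b * ((u a)^* * u b)))); last first.
  move=> b _; rewrite /Id; set z1 := (if a == b then _ else _); set z2 := (t%:C)%C; set z3 := ((1 - t)%:C)%C; ring.
by rewrite big_split /= -!mulr_sumr sum_delta.
Qed.

Lemma tr_Qm d (u : 'I_d -> C) : (0 < d)%N -> inner u u = 1 ->
  optrace (Qm u d%:R^-1) = 0.
Proof.
move=> d0 hu; rewrite /optrace /Qm /Pm sumrB.
rewrite (eq_bigr (fun a => (u a)^* * u a)); last by move=> a _; rewrite mulrC.
rewrite -/(inner u u) hu (eq_bigr (fun _ => d%:R^-1)); last by move=> a _; rewrite /Id eqxx mulr1.
rewrite sumr_const card_ord.
have -> : (d%:R : C)^-1 *+ d = d%:R * d%:R^-1 by rewrite mulr_natl.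
by rewrite mulfV ?subrr // pnatr_eq0 -lt0n.
Qed.
End S.

Unset Implicit Arguments.

Theorem proposition7p1 (R : rcfType) (d N : nat) (t : 'I_N -> R) :
  (2 <= d)%N ->
  has_N_MUBs R d N ->
  (forall i, 0 <= t i <= 1) ->
  1 < \sum_(i < N) t i ^+ 2 ->
  ~ compatible (fun i : 'I_N => @depolarizing R d (t i)).
Proof.
move=> d2 [B [hB hU]] ht hS [Lam [[hlin hcp htp] hmarg]].
have d0 : (0 < d)%N by apply: leq_trans d2.
have dn0 : (d%:R : R[i]) != 0 by rewrite pnatr_eq0 -lt0n.
case: (posnP N) => [N0|Npos].
  by move: hS; rewrite big1 ?ltr10 // => -[i hi]; exfalso; move: (hi); rewrite N0.
pose i0 : 'I_N := Ordinal Npos.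
pose tC i := ((t i)%:C)%C.
have htC : forall i, (tC i)^* = tC i by move=> i; rewrite /tC cj_real.
set c := (1 - d%:R^-1) * (\sum_i tC i * tC i + 1) / 2.
pose M (k : tens_index d N) := fun a b => c * @Id R d a b - \sum_i tC i * Qm (B i (k i)) d%:R^-1 a b.
have hv1 : forall i ka, inner (B i ka) (B i ka) = 1.
  by move=> i ka; rewrite hB eqxx.
have hv2 : forall (k : tens_index d N) i j, i != j ->
    inner (B i (k i)) (B j (k j)) * inner (B j (k j)) (B i (k i)) = d%:R^-1.
  move=> k i j ij; rewrite -[inner (B j _) _]conj_inner -normCK (hU i j ij).
  by rewrite -(rmorphXn (real_complex R)) exprVn sqr_sqrtr ?ler0n // fmorphV rmorph_nat.
have psdM : forall k, psd (M k).
  move=> k; apply: (psd_M (v := fun i => B i (k i))) => //.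
  exact: hv2.
have lin : forall k, qf (Lam (M k)) (w B k)
    = c * qf (Lam (@Id R d)) (w B k)
      - \sum_i tC i * qf (Lam (Qm (B i (k i)) d%:R^-1)) (w B k).
  by move=> k; rewrite /M Llin // qf_lin.
have sum0 : 0 <= \sum_k qf (Lam (M k)) (w B k).
  by apply: sumr_ge0 => k _; exact: (cp_pos hcp (psdM k)).
rewrite (eq_bigr _ (fun k _ => lin k)) sumrB -mulr_sumr (sum_w_qf i0) // htp in sum0.
have trId : optrace (@Id R d) = d%:R.
  by rewrite /optrace (eq_bigr (fun _ => 1)) ?sumr_const ?card_ord // => a _; rewrite /Id eqxx.
have hi : forall i, \sum_(k : tens_index d N) qf (Lam (Qm (B i (k i)) d%:R^-1)) (w B k)
    = d%:R * (tC i * (1 - d%:R^-1)).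
  move=> i.
  rewrite (partition_big (fun k : tens_index d N => k i) predT) //=.
  rewrite (eq_bigr (fun _ => tC i * (1 - d%:R^-1))).
    by rewrite sumr_const card_ord mulr_natl.
  move=> ka _.
  rewrite (eq_bigr (fun k => qf (Lam (Qm (B i ka) d%:R^-1)) (w B k))); last first.
    by move=> k /eqP ->.
  rewrite marg_w // hmarg qf_depol tr_Qm // qf_Qm hv1.
  by rewrite mul0r mulr0 mul0r addr0 !mulr1.
rewrite exchange_big /= in sum0.
rewrite (eq_bigr (fun i => tC i * (d%:R * (tC i * (1 - d%:R^-1))))) in sum0; last first.
  by move=> i _; rewrite -mulr_sumr hi.
rewrite trId in sum0.
set S := \sum_(i < N) t i ^+ 2 in hS.
have SC : \sum_i tC i * tC i = (S%:C)%C.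
  rewrite /S rmorph_sum; apply: eq_bigr => i _; rewrite /tC rmorphXn expr2 //.
have E1 : \sum_i tC i * (d%:R * (tC i * (1 - d%:R^-1)))
    = (d%:R - 1) * \sum_i tC i * tC i.
  rewrite mulr_sumr; apply: eq_bigr => i _; field; exact: dn0.
have E2 : c * d%:R - (d%:R - 1) * \sum_i tC i * tC i
    = (((d%:R - 1) / 2 * (1 - S))%:C)%C.
  rewrite /c SC rmorphM rmorphB rmorph1 fmorph_div rmorphB rmorph1 !rmorph_nat.
  have two0 : (2 : R[i]) != 0 by rewrite pnatr_eq0.
  by field; rewrite ?two0 ?dn0.
rewrite E1 E2 ler0c pmulr_rge0 ?subr_ge0 in sum0; last first.
  by rewrite divr_gt0 // subr_gt0 ltr1n.
by move: hS; rewrite ltNge sum0.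
Qed.
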